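(* Let $N_r, N_t, L, m$ be positive integers with $L \le \min\{N_r, N_t\}$ and $L \le m \le N_t$. Let $h_1,\dots,h_L \in \mathbb{C}$ be path gains and let $\theta_{r,1},\dots,\theta_{r,L}$ and $\theta_{t,1},\dots,\theta_{t,L}$ be angles in $[-\pi/2,\pi/2)$. Define the channel matrix $$\mathbf{H} = \sqrt{\tfrac{N_r N_t}{L}}\sum_{l=1}^{L} h_l\, \mathbf{a}_r(\theta_{r,l})\, \mathbf{a}_t(\theta_{t,l})^H = \mathbf{A}_r \operatorname{diag}(\mathbf{h})\mathbf{A}_t^H \cdot \sqrt{\tfrac{N_rN_t}{L}},$$ where $\mathbf{a}_r(\theta) = \frac{1}{\sqrt{N_r}}[1, e^{-j\pi\sin\theta}, \dots, e^{-j\pi (N_r-1)\sin\theta}]^T \in \mathbb{C}^{N_r}$ and $\mathbf{a}_t(\theta) = \frac{1}{\sqrt{N_t}}[1, e^{-j\pi\sin\theta}, \dots, e^{-j\pi (N_t-1)\sin\theta}]^T\in\mathbb{C}^{N_t}$. Let $\mathbf{S} = \begin{bmatrix}\mathbf{I}_m \\ \mathbf{0}_{(N_t-m)\times m}\end{bmatrix} \in \mathbb{R}^{N_t\times m}$ and $\mathbf{H}_S = \mathbf{H}\mathbf{S}$, i.e. $\mathbf{H}_S$ consists of the first $m$ columns of $\mathbf{H}$. If the angles $\theta_{t,1},\dots,\theta_{t,L}$ are pairwise distinct and the angles $\theta_{r,1},\dots,\theta_{r,L}$ are pairwise distinct, then the column spaces of $\mathbf{H}_S$ and $\mathbf{H}$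 coincide: $\operatorname{col}(\mathbf{H}_S) = \operatorname{col}(\mathbf{H})$.
   Context: $\operatorname{col}(\mathbf{X})$ denotes the subspace spanned by the columns of $\mathbf{X}$; $j=\sqrt{-1}$; $(\cdot)^H$ is conjugate transpose. The array response vectors correspond to uniform linear arrays with half-wavelength antenna spacing. *)

(* Defs.v *)
From mathcomp Require Import all_boot all_order all_algebra.
From mathcomp Require Import complex.
From mathcomp Require Import all_classical all_reals all_analysis.
Set Implicit Arguments. Unset Strict Implicit. Unset Printing Implicit Defensive.
Import Order.TTheory GRing.Theory Num.Theory ComplexField.
Local Open Scope ring_scope.
Local Open Scope complex_scope.

Definition expj {R : realType} (x : R) : R[i] := (cos x) +i* (sin x).

Definition cr {R : realType} (x : R) : R[i] := x%:C.

(* ULA array response vector with half-wavelength spacing, length N: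
   a(theta) = 1/sqrt(N) [1, e^{-j pi sin theta}, ..., e^{-j pi (N-1) sin theta}]^T *)
Definition ula {R : realType} (N : nat) (theta : R) : 'cV[R[i]]_N :=
  \col_(k < N) (cr (1 / Num.sqrt (N%:R)) * expj (- (pi * (k%:R) * sin theta))).

Definition adjmx {R : realType} (p q : nat) (X : 'M[R[i]]_(p, q)) : 'M[R[i]]_(q, p) :=
  map_mx conjc (X^T).

Definition channel {R : realType} (Nr Nt L : nat) (h : 'I_L -> R[i])
  (thr tht : 'I_L -> R) : 'M[R[i]]_(Nr, Nt) :=
  cr (Num.sqrt ((Nr * Nt)%:R / L%:R)) *:
    \sum_(l < L) (h l *: (ula Nr (thr l) *m adjmx (ula Nt (tht l)))).

Definition selmx {R : realType} (Nt m : nat) : 'M[R[i]]_(Nt, m) :=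
  \matrix_(i < Nt, j < m) ((i : nat) == j)%:R.

Definition colspace_eq {F : fieldType} (p q1 q2 : nat)
  (X : 'M[F]_(p, q1)) (Y : 'M[F]_(p, q2)) : Prop := (X^T :=: Y^T)%MS.

(* Main.v *)
Require Import Defs.
From mathcomp Require Import all_boot all_order all_algebra.
From mathcomp Require Import complex.
From mathcomp Require Import all_classical all_reals all_analysis.
From mathcomp Require Import ring lra.
Import Order.TTheory GRing.Theory Num.Theory ComplexField.
Local Open Scope ring_scope.
Local Open Scope complex_scope.
Set Implicit Arguments. Unset Strict Implicit.

Lemma expjD (R : realType) (a b : R) : expj (a + b) = expj a * expj b.
Proof.
rewrite /expj sinD cosD; simpc. congr (_ +i* _); ring.
Qed.

Lemma expjX (R : realType) (a : R) (k : nat) : expj (k%:R * a) = expj a ^+ k.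
Proof.
elim: k => [|k IH]; first by rewrite mul0r /expj sin0 cos0.
by rewrite exprSr -IH -expjD -natr1 mulrDl mul1r.
Qed.

Lemma conj_entry (R : realType) (c x : R) : ((cr c * expj (- x))^*)%C = cr c * expj x.
Proof.
rewrite /cr /expj sinN cosN; simpc. congr (_ +i* _); ring.
Qed.

Lemma sin_inj_pi2 (R : realType) (a b : R) :
  - (pi / 2) <= a <= pi / 2 -> - (pi / 2) <= b <= pi / 2 -> sin a = sin b -> a = b.
Proof.
move=> ha hb e.
have ka := @sinK R a; have kb := @sinK R b.
by rewrite -ka ?in_itv //= e kb ?in_itv.
Qed.

Lemma sin_lt1 (R : realType) (a : R) : - (pi / 2) <= a < pi / 2 -> sin a < 1.
Proof.
move=> /andP[h1 h2]; rewrite lt_neqAle sin_le1 andbT; apply/eqP => e.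
have pi2 : 0 < pi / 2 :> R by rewrite divr_gt0 ?pi_gt0.
have : a = pi / 2.
  apply: sin_inj_pi2; rewrite ?e ?sin_pihalf //.
  - by rewrite h1 ltW.
  - by rewrite lexx andbT; lra.
by move=> ea; move: h2; rewrite ea ltxx.
Qed.

Lemma sin_zero (R : realType) (t : R) : - pi < t < pi -> sin t = 0 -> t = 0.
Proof.
move=> /andP[h1 h2] e.
case: (ltgtP t 0) => // ht.
- have : 0 < sin (- t) by apply: sin_gt0_pi; apply/andP; split; lra.
  by rewrite sinN e oppr0 ltxx.
- have : 0 < sin t by apply: sin_gt0_pi; apply/andP; split; lra.
  by rewrite e ltxx.
Qed.

Lemma expj_inj (R : realType) (x y : R) : - pi <= x < pi -> - pi <= y < pi ->
  expj x = expj y -> x = y.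
Proof.
move=> /andP[hx1 hx2] /andP[hy1 hy2] [ec es].
pose t := (x - y) / 2; pose u := (x + y) / 2.
have ex : x = u + t by rewrite /u /t; field.
have ey : y = u + - t by rewrite /u /t; field.
have h1 : cos u * sin t = 0.
  have : sin x - sin y = 2 * (cos u * sin t) by rewrite ex ey !sinD cosN sinN; ring.
  rewrite es subrr => /esym /eqP; rewrite mulf_eq0 => /orP[|/eqP //].
  by rewrite pnatr_eq0.
have h2 : sin u * sin t = 0.
  have : cos x - cos y = - 2 * (sin u * sin t) by rewrite ex ey !cosD cosN sinN; ring.
  rewrite ec subrr => /esym /eqP; rewrite mulf_eq0 => /orP[|/eqP //].
  by rewrite oppr_eq0 pnatr_eq0.
have st : sin t = 0.
  have -> : sin t = cos u * (cos u * sin t) + sin u * (sin u * sin t).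
    have := cos2Dsin2 u => c2; rewrite -[LHS]mul1r -c2; ring.
  by rewrite h1 h2 !mulr0 addr0.
have : t = 0 by apply: (@sin_zero R t) => //; apply/andP; split; rewrite /t; lra.
rewrite /t => /eqP; rewrite mulf_eq0 invr_eq0 pnatr_eq0 orbF subr_eq0 => /eqP //.
Qed.

Lemma node_inj (R : realType) (a b : R) : - (pi / 2) <= a < pi / 2 -> - (pi / 2) <= b < pi / 2 ->
  expj (pi * sin a) = expj (pi * sin b) -> a = b.
Proof.
move=> ha hb e.
have p0 := @pi_gt0 R.
have rg : forall c : R, - (pi / 2) <= c < pi / 2 -> - pi <= pi * sin c < pi.
  move=> c hc; have s1 := @sin_lt1 R c hc; have s2 := sin_geN1 c.
  apply/andP; split; nra.
have := @expj_inj R _ _ (rg a ha) (rg b hb) e => /(congr1 (fun z => z / pi)).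
rewrite !(mulrC pi) !mulfK ?gt_eqF // => es.
apply: (@sin_inj_pi2 R) => //.
- by case/andP: ha => -> /ltW.
- by case/andP: hb => -> /ltW.
Qed.

Definition Btm (R : realType) (Nt L : nat) (tht : 'I_L -> R) : 'M[R[i]]_(Nt, L) :=
  \matrix_(k, l) ((ula Nt (tht l) k 0)^*)%C.

Definition Mm (R : realType) (Nr Nt L : nat) (h : 'I_L -> R[i]) (thr : 'I_L -> R) : 'M[R[i]]_(L, Nr) :=
  \matrix_(l, i) (cr (Num.sqrt ((Nr * Nt)%:R / L%:R)) * h l * ula Nr (thr l) i 0).

Lemma HT (R : realType) (Nr Nt L : nat) (h : 'I_L -> R[i]) (thr tht : 'I_L -> R) :
  (channel Nr Nt h thr tht)^T = Btm Nt tht *m Mm Nr Nt h thr.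
Proof.
apply/matrixP => k i; rewrite !mxE summxE mulr_sumr; apply: eq_bigr => l _.
rewrite !mxE big_ord1 !mxE; ring.
Qed.

Lemma selT (R : realType) (Nt m L : nat) (Hm : (m <= Nt)%N) (X : 'M[R[i]]_(Nt, L)) :
  (selmx Nt m)^T *m X = \matrix_(j < m, l < L) X (widen_ord Hm j) l.
Proof.
apply/matrixP => j l; rewrite !mxE (bigD1 (widen_ord Hm j)) //= big1 ?addr0.
  by rewrite !mxE eqxx mul1r.
move=> i /negbTE ne; rewrite !mxE.
suff -> : ((i : nat) == j) = false by rewrite mul0r.
by apply/negbTE; apply: contraFN ne => /eqP e; apply/eqP/val_inj; rewrite /= e.
Qed.

Unset Implicit Arguments.
Set Strict Implicit.
Local Close Scope complex_scope.

Theorem lemma1 (R : realType) (Nr Nt L m : nat)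
  (h : 'I_L -> R[i]) (thr tht : 'I_L -> R) :
  (0 < Nr)%N -> (0 < Nt)%N -> (0 < L)%N -> (0 < m)%N ->
  (L <= minn Nr Nt)%N -> (L <= m)%N -> (m <= Nt)%N ->
  (forall l, - (pi / 2) <= thr l < pi / 2) ->
  (forall l, - (pi / 2) <= tht l < pi / 2) ->
  injective tht -> injective thr ->
  colspace_eq (channel Nr Nt h thr tht *m selmx Nt m) (channel Nr Nt h thr tht).
Proof.
move=> Nr0 Nt0 L0 m0 LNmin Lm mNt hr ht injt injr.
rewrite /colspace_eq trmx_mul HT.
set B := Btm Nt tht; set M := Mm Nr Nt h thr.
apply/eqmxP/andP; split; first exact: submxMl.
rewrite mulmxA submxMr //; apply: submx_full.
rewrite -sub1mx; apply: submx_trans (rowsub_sub (widen_ord Lm) _).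
rewrite sub1mx row_full_unit unitmxE unitfE selT.
pose c : R := 1 / Num.sqrt (Nt%:R).
pose w : 'rV[R[i]]_L := \row_l expj (pi * sin (tht l)).
have -> : rowsub (widen_ord Lm) (\matrix_(j < m, l < L) B (widen_ord mNt j) l)
    = cr c *: Vandermonde L w.
  apply/matrixP => k l; rewrite !mxE conj_entry -expjX /=; congr (_ * expj _); ring.
rewrite detZ det_Vandermonde mulf_neq0 //.
  rewrite expf_neq0 // /cr; apply/eqP => -[] /eqP.
  rewrite /c div1r invr_eq0 sqrtr_eq0.
  by rewrite leNgt ltr0n Nt0.
apply/prodf_neq0 => i _; apply/prodf_neq0 => j ij.
rewrite subr_eq0 !mxE; apply/eqP => e.
have := node_inj (ht j) (ht i) e => /injt eji.
by move: ij; rewrite eji ltnn.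
Qed.
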